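(* Let $H_{\mathbb{C}}$ be the complex Heisenberg group of complex matrices $\begin{pmatrix}1&u_2&u_3\\0&1&u_1\\0&0&1\end{pmatrix}$. Let $\Lambda=\mathbb{Z}\langle1,e^{2\pi i/3}\rangle$ and $\Lambda'=\mathbb{Z}\langle1,i\rangle$ (Gaussian integers), and let $\Gamma_H$ (resp. $\Gamma_0$) be the subgroup of $H_{\mathbb{C}}$ of matrices with $u_1,u_2,u_3\in\Lambda$ (resp. $\in\Lambda'$). Let $N=\Gamma_H\backslash H_{\mathbb{C}}$ and let $N'=\Gamma_0\backslash H_{\mathbb{C}}$ be the Iwasawa manifold. Then $\pi_1(N)=\Gamma_H$ and $\pi_1(N')=\Gamma_0$ are not isomorphic groups; in particular $N$ and $N'$ are not diffeomorphic. *)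

(* Defs.v *)
From mathcomp Require Import all_boot all_order all_algebra all_field.
Set Implicit Arguments. Unset Strict Implicit. Unset Printing Implicit Defensive.
Import GRing.Theory Num.Theory.
Local Open Scope ring_scope.

(* e^{2 pi i / 3} = (-1 + i sqrt 3)/2 *)
Definition omega3 : algC := (-1 + 'i * sqrtC 3) / 2.

Definition in_lattice (w z : algC) : Prop :=
  exists a b : int, z = a%:~R + b%:~R * w.

Definition heis (u1 u2 u3 : algC) : 'M[algC]_3 :=
  \matrix_(i < 3, j < 3)
    if (i : nat) == j then 1
    else if ((i : nat) == 0%N) && ((j : nat) == 1%N) then u2
    else if ((i : nat) == 0%N) && ((j : nat) == 2%N) then u3
    else if ((i : nat) == 1%N) && ((j : nat) == 2%N) then u1
    else 0.

Definition Gamma (w : algC) (M : 'M[algC]_3) : Prop :=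
  exists u1 u2 u3, [/\ in_lattice w u1, in_lattice w u2, in_lattice w u3
                     & M = heis u1 u2 u3].

(* a group isomorphism from Gamma w to Gamma w' (given by a function on
   matrices whose behaviour outside Gamma w is irrelevant) *)
Definition group_iso (w w' : algC) (f : 'M[algC]_3 -> 'M[algC]_3) : Prop :=
  [/\ (forall M, Gamma w M -> Gamma w' (f M)),
      (forall M N, Gamma w M -> Gamma w N -> f M = f N -> M = N),
      (forall N, Gamma w' N -> exists2 M, Gamma w M & f M = N)
    & (forall M N, Gamma w M -> Gamma w N -> f (M *m N) = f M *m f N)].

(* Main.v *)
Require Import Defs.
From mathcomp Require Import all_boot all_order all_algebra all_field.
From mathcomp Require Import ring zify.
Import GRing.Theory Num.Theory.
Local Open Scope ring_scope.

Lemma heisM a1 a2 a3 b1 b2 b3 :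
  heis a1 a2 a3 *m heis b1 b2 b3 = heis (a1 + b1) (a2 + b2) (a3 + b3 + a2 * b1).
Proof.
apply/matrixP => i j; rewrite !mxE !big_ord_recr big_ord0 /= !mxE.
case: i => [[|[|[|i]]] Hi] //; case: j => [[|[|[|j]]] Hj] //= ; ring.
Qed.

Lemma heis_inj a1 a2 a3 b1 b2 b3 :
  heis a1 a2 a3 = heis b1 b2 b3 -> [/\ a1 = b1, a2 = b2 & a3 = b3].
Proof.
move=> E.
have h1 := congr1 (fun M : 'M[algC]_3 => M (@Ordinal 3 1 isT) (@Ordinal 3 2 isT)) E.
have h2 := congr1 (fun M : 'M[algC]_3 => M (@Ordinal 3 0 isT) (@Ordinal 3 1 isT)) E.
have h3 := congr1 (fun M : 'M[algC]_3 => M (@Ordinal 3 0 isT) (@Ordinal 3 2 isT)) E.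
by move: h1 h2 h3; rewrite !mxE /=.
Qed.

Arguments heis_inj {a1 a2 a3 b1 b2 b3}.

Lemma gauss0 (x y : int) : x%:~R + y%:~R * 'i = 0 :> algC -> x = 0 /\ y = 0.
Proof.
move=> h.
have hi : 'i * 'i = -1 :> algC by rewrite -expr2 sqrCi.
have : ((x * x + y * y)%:~R : algC) = 0.
  have -> : ((x * x + y * y)%:~R : algC) = (x%:~R + y%:~R * 'i) * (x%:~R - y%:~R * 'i) + y%:~R * y%:~R * ('i * 'i + 1).
    rewrite rmorphD !rmorphM /=. ring.
  by rewrite h hi; ring.
move/eqP; rewrite intr_eq0 => /eqP; nia.
Qed.

Lemma lat0 w : in_lattice w 0. Proof. by exists 0, 0; rewrite mul0r addr0. Qed.
Lemma lat1 w : in_lattice w 1. Proof. by exists 1, 0; rewrite mul0r addr0. Qed.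
Lemma latw w : in_lattice w w. Proof. by exists 0, 1; rewrite mul1r add0r. Qed.
Lemma latD w x y : in_lattice w x -> in_lattice w y -> in_lattice w (x + y).
Proof.
move=> [a [b ->]] [c [d ->]]; exists (a + c), (b + d).
rewrite !rmorphD /=; ring.
Qed.
Lemma latN w x : in_lattice w x -> in_lattice w (- x).
Proof.
move=> [a [b ->]]; exists (- a), (- b); rewrite !rmorphN /=; ring.
Qed.
Lemma latM w p q x y : w * w = p%:~R + q%:~R * w ->
  in_lattice w x -> in_lattice w y -> in_lattice w (x * y).
Proof.
move=> hw [a [b ->]] [c [d ->]]; exists (a * c + b * d * p), (a * d + b * c + b * d * q).
rewrite !rmorphD !rmorphM /=.
have -> : (a%:~R + b%:~R * w) * (c%:~R + d%:~R * w) =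
  a%:~R * c%:~R + (a%:~R * d%:~R + b%:~R * c%:~R) * w + b%:~R * d%:~R * (w * w) :> algC by ring.
rewrite hw; ring.
Qed.

Arguments latM {w p q x y}.

Definition good (w : algC) := exists p q : int, w * w = p%:~R + q%:~R * w.

Lemma Gamma_mul w M N : good w -> Gamma w M -> Gamma w N -> Gamma w (M *m N).
Proof.
move=> [p [q hw]] [a1 [a2 [a3 [h1 h2 h3 ->]]]] [b1 [b2 [b3 [k1 k2 k3 ->]]]].
rewrite heisM; exists (a1 + b1), (a2 + b2), (a3 + b3 + a2 * b1); split; try by apply: latD.
apply: latD; [apply: latD | apply: (latM hw)]; try done.
by [].
Qed.

Lemma heis_comm a1 a2 a3 b1 b2 b3 :
  heis a1 a2 a3 *m heis b1 b2 b3 =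
  (heis b1 b2 b3 *m heis a1 a2 a3) *m heis 0 0 (a2 * b1 - b2 * a1).
Proof. rewrite !heisM; congr heis; ring. Qed.

Definition Sx w x c := exists2 y, Gamma w y & x *m y = (y *m x) *m c.
Definition central w z := forall y, Gamma w y -> z *m y = y *m z.
Definition Prop2 w x := exists z, [/\ Gamma w z, central w z, ~ (Sx w x z)
  & forall z', Gamma w z' -> central w z' -> Sx w x z' \/ Sx w x (z' *m z)].

Lemma transport w w' f x : good w -> good w' -> group_iso w w' f -> Gamma w x ->
  Prop2 w' (f x) -> Prop2 w x.
Proof.
move=> gw gw' [fG finj fsurj fM] Gx [z0 [Gz0 cz0 nS hS]].
have [z Gz fz] := fsurj _ Gz0.
have back : forall c, Gamma w c -> Sx w' (f x) (f c) -> Sx w x c.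
  move=> c Gc [y' Gy' E]; have [y Gy fy] := fsurj _ Gy'; subst y'.
  exists y => //; apply: finj.
  - exact: Gamma_mul.
  - by do 2? apply: Gamma_mul.
  by rewrite !fM //; apply: Gamma_mul.
exists z; split => //.
- move=> y Gy; apply: finj; try exact: Gamma_mul.
  by rewrite !fM // fz cz0 //; apply: fG.
- move=> [y Gy E]; apply: nS; exists (f y); first exact: fG.
  by rewrite -fz -!fM // ?E //; apply: Gamma_mul.
move=> z' Gz' cz'.
have cfz' : central w' (f z').
  move=> y' Gy'; have [y Gy fy] := fsurj _ Gy'; subst y'.
  by rewrite -!fM // cz'.
case: (hS (f z') (fG _ Gz') cfz') => H; [left | right].
- exact: back.
- apply: back; first exact: Gamma_mul.
  by rewrite fM // fz.
Qed.

Lemma central_form w z : Gamma w z -> central w z ->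
  exists2 t, in_lattice w t & z = heis 0 0 t.
Proof.
move=> [z1 [z2 [z3 [h1 h2 h3 ->]]]] cz.
have e1 := cz (heis 1 0 0) (ex_intro _ 1 (ex_intro _ 0 (ex_intro _ 0 (And4 (lat1 w) (lat0 w) (lat0 w) erefl)))).
have e2 := cz (heis 0 1 0) (ex_intro _ 0 (ex_intro _ 1 (ex_intro _ 0 (And4 (lat0 w) (lat1 w) (lat0 w) erefl)))).
rewrite !heisM in e1 e2.
case: (heis_inj e1) => _ _; case: (heis_inj e2) => _ _.
rewrite !mulr0 !mul0r !mulr1 !mul1r !addr0 !add0r => E2 E1.
have -> : z1 = 0 by apply: (@addrI _ z3); rewrite addr0 -E2.
have -> : z2 = 0 by apply: (@addrI _ z3); rewrite addr0 E1.
by exists z3.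
Qed.

Lemma central00 w t : central w (heis 0 0 t).
Proof.
move=> y [b1 [b2 [b3 [_ _ _ ->]]]]; rewrite !heisM; congr heis; ring.
Qed.

Lemma Sx_heis w a1 a2 a3 t :
  Sx w (heis a1 a2 a3) (heis 0 0 t) <->
  exists b1 b2, [/\ in_lattice w b1, in_lattice w b2 & t = a2 * b1 - b2 * a1].
Proof.
split.
- move=> [y [b1 [b2 [b3 [h1 h2 h3 ->]]]] E].
  exists b1, b2; split => //.
  rewrite heis_comm !heisM in E; case: (heis_inj E) => _ _.
  rewrite !mulr0 !addr0 => /addrI; done.
- move=> [b1 [b2 [h1 h2 ->]]]; exists (heis b1 b2 0).
    by exists b1, b2, 0; split => //; apply: lat0.
  exact: heis_comm.
Qed.

Lemma omega_sq : omega3 * omega3 = -1 - omega3.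
Proof.
have hi : 'i * 'i = -1 :> algC by rewrite -expr2 sqrCi.
have hs : sqrtC 3 * sqrtC 3 = 3 :> algC by rewrite -expr2 sqrtCK.
rewrite /omega3.
have -> : (-1 + 'i * sqrtC 3) / 2 * ((-1 + 'i * sqrtC 3) / 2) =
   -1 - (-1 + 'i * sqrtC 3) / 2 + (3 + ('i * 'i) * (sqrtC 3 * sqrtC 3)) / 4 :> algC.
  by field.
by rewrite hi hs mulN1r subrr mul0r addr0.
Qed.

Lemma good_omega : good omega3.
Proof. by exists (-1), (-1); rewrite omega_sq !rmorphN /= rmorph1 mulN1r. Qed.

Lemma good_i : good 'i.
Proof. by exists (-1), 0; rewrite -expr2 sqrCi rmorphN /= rmorph1 mul0r addr0. Qed.

Lemma eis_no x : Gamma omega3 x -> ~ Prop2 omega3 x.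
Proof.
have [p [q hw]] := good_omega.
move=> [a1 [a2 [a3 [h1 h2 h3 ->]]]] [z [Gz cz nS hS]].
have [t0 lt0 ez] := central_form _ _ Gz cz; subst z.
pose I t := exists b1 b2, [/\ in_lattice omega3 b1, in_lattice omega3 b2 & t = a2 * b1 - b2 * a1].
have nI : ~ I t0 by move=> H; apply: nS; apply/Sx_heis.
have hI : forall t, in_lattice omega3 t -> I t \/ I (t + t0).
  move=> t lt.
  have Gt : Gamma omega3 (heis 0 0 t) by exists 0, 0, t; split => //; apply: lat0.
  case: (hS _ Gt (central00 _ _)) => H; [left; exact: (proj1 (Sx_heis _ _ _ _ _) H) | right].
  by move: H; rewrite heisM mulr0 !addr0 => H; exact: (proj1 (Sx_heis _ _ _ _ _) H).
have ID : forall s s', I s -> I s' -> I (s + s').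
  move=> s s' [b1 [b2 [l1 l2 ->]]] [c1 [c2 [m1 m2 ->]]].
  exists (b1 + c1), (b2 + c2); split; try by apply: latD.
  ring.
have IM : forall l s, in_lattice omega3 l -> I s -> I (l * s).
  move=> l s ll [b1 [b2 [l1 l2 ->]]].
  exists (l * b1), (l * b2); split; try by apply: (latM hw).
  ring.
have IN : forall s, I s -> I (- s).
  move=> s Is; rewrite -mulN1r; apply: IM => //; apply: latN; apply: lat1.
have n1 : ~ I 1 by move=> H; apply: nI; rewrite -[t0]mulr1; apply: IM.
have I1 : I (1 + t0) by case: (hI 1 (lat1 _)).
have I2 : I (t0 + t0) by case: (hI t0 lt0).
have lw := latw omega3.
case: (hI omega3 lw) => [Iw | Iwt].
  apply: n1; have -> : 1 = (-1 - omega3) * omega3.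
    by rewrite mulrBl omega_sq; ring.
  apply: IM => //; apply: latD; [apply: latN; apply: lat1 | by apply: latN].
have Iw1 : I (omega3 + 1).
  have -> : omega3 + 1 = (omega3 + t0) + (1 + t0) + - (t0 + t0) by ring.
  exact: (ID _ _ (ID _ _ Iwt I1) (IN _ I2)).
apply: n1; have -> : 1 = (- omega3) * (omega3 + 1).
  by rewrite mulrDr mulNr omega_sq; ring.
by apply: IM => //; apply: latN.
Qed.

Lemma parity (n : int) : exists k : int, n = 2 * k \/ n = 2 * k + 1.
Proof. exists (n %/ 2)%Z; lia. Qed.

Lemma gmem (p q k : int) : p + q = 2 * k ->
  exists b1 b2, [/\ in_lattice 'i b1, in_lattice 'i b2 &
     p%:~R + q%:~R * 'i = 0 * b1 - b2 * (1 + 'i)].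
Proof.
move=> hk.
have hi : 'i * 'i = -1 :> algC by rewrite -expr2 sqrCi.
exists 0, ((- k)%:~R + (p - k)%:~R * 'i); split; first exact: lat0.
  by exists (- k), (p - k).
have -> : q = 2 * k - p by lia.
rewrite !rmorphB !rmorphM !rmorphN /=.
have -> : ((- k%:~R) + (p%:~R - k%:~R) * 'i) * (1 + 'i) =
   - k%:~R + (p%:~R - k%:~R) * 'i - k%:~R * 'i + (p%:~R - k%:~R) * ('i * 'i) :> algC by ring.
rewrite hi; ring.
Qed.

Lemma gauss_yes : Prop2 'i (heis (1 + 'i) 0 0).
Proof.
have hi : 'i * 'i = -1 :> algC by rewrite -expr2 sqrCi.
exists (heis 0 0 1); split.
- by exists 0, 0, 1; split => //; [apply: lat0 | apply: lat0 | apply: lat1].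
- exact: central00.
- move=> H; have [b1 [b2 [_ [r [s eb]] E]]] := proj1 (Sx_heis _ _ _ _ _) H.
  have [] := @gauss0 (1 + r - s) (r + s).
    rewrite !rmorphD !rmorphN /= rmorph1.
    have -> : 1 + r%:~R - s%:~R + (r%:~R + s%:~R) * 'i =
      1 + (r%:~R + s%:~R * 'i) * (1 + 'i) - s%:~R * ('i * 'i + 1) :> algC by ring.
    have E' : 1 + b2 * (1 + 'i) = 0 by rewrite {1}E; ring.
    by rewrite hi addNr mulr0 subr0 -eb E'.
  lia.
move=> z' Gz' cz'; have [t [p [q et]] ->] := central_form _ _ Gz' cz'.
have [k [hk | hk]] := parity (p + q).
- left; apply/(proj2 (Sx_heis _ _ _ _ _)).
  by rewrite et; apply: gmem hk.
- right; rewrite heisM mulr0 !addr0; apply/(proj2 (Sx_heis _ _ _ _ _)).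
  have := @gmem (p + 1) q (k + 1) ltac:(lia).
  by rewrite et rmorphD /= rmorph1 -addrA (addrC 1) addrA.
Qed.

Theorem proposition3p3 :
  ~ exists f : 'M[algC]_3 -> 'M[algC]_3, group_iso omega3 'i f.
Proof.
move=> [f iso].
have Gx0 : Gamma 'i (heis (1 + 'i) 0 0).
  by exists (1 + 'i), 0, 0; split; [exists 1, 1; rewrite !rmorph1 mul1r | apply: lat0 | apply: lat0 |].
case: iso => [fG finj fsurj fM].
have [x Gx fx] := fsurj _ Gx0.
apply: (eis_no _ Gx).
apply: (transport _ _ _ _ good_omega good_i (And4 fG finj fsurj fM) Gx).
by rewrite fx; exact: gauss_yes.
Qed.
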